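(* Let $D$ be a square-free integer, let $\mathbb{Z}[\sqrt{D}]$ denote the ring of integers of $\mathbb{Q}(\sqrt{D})$, let $p$ be a prime integer which is irreducible but not prime in $\mathbb{Z}[\sqrt{D}]$, let $z\in I_p(D)$ and put $k=\lVert z\rVert/p$. For any $a,b,c,d,e,f\in\mathbb{Z}[\sqrt{D}]$, we have that $A(p,z)=BC$ where $B=\begin{pmatrix} a&b\\ c&1-a\end{pmatrix}$ and $C=\begin{pmatrix} d&e\\ f&1-d\end{pmatrix}$ are idempotent matrices if and only if $$p=ad+bf,\quad z(1-a)=kb,\quad \bar z a=pc,\quad zd=pe,\quad \bar z(1-d)=kf.$$
   Context: $\mathbb{Z}[\sqrt{D}]=\{a+b\sqrt{D}:a,b\in\mathbb{Z}\}$ if $D\equiv 2,3 \pmod 4$ and $\{\frac{a+b\sqrt{D}}{2}:a,b\in\mathbb{Z},a\equiv b \pmod 2\}$ if $D\equiv 1\pmod 4$. $\bar z$ denotes the conjugate and $\lVert z\rVert=z\bar z$ the norm. $I_p(D)$ is the set of all non-unit $z\in\mathbb{Z}[\sqrt{D}]$ such that $z\notin\langle p\rangle$ but there exists $m\notin\langle p\rangle$ with $zm\in\langle p\rangle$ (for such $z$, $p$ divides $\lVert z\rVert$). $A(p,z)=\begin{pmatrix} p & z\\ \bar z & \lVert z\rVert/p\end{pmatrix}$. A matrix $M$ is idempotent if $M^2=M$. *)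

(* Defs.v *)
From HB Require Import structures.
From mathcomp Require Import all_boot all_order all_algebra.
From mathcomp Require Import ring.
Set Implicit Arguments. Unset Strict Implicit. Unset Printing Implicit Defensive.
Import Order.TTheory GRing.Theory Num.Theory.
Local Open Scope ring_scope.

(* The ring of integers O_D of Q(sqrt D), represented on its Z-basis       *)
(* {1, w} where  w = sqrt D          if D = 2,3 (mod 4)                     *)
(*               w = (1 + sqrt D)/2  if D = 1   (mod 4).                    *)
(* In both cases w^2 = tD * w + nD with                                     *)
(*   tD = 0, nD = D              (D = 2,3 mod 4)                            *)
(*   tD = 1, nD = (D - 1)/4      (D = 1 mod 4),                             *)
(* and the conjugate of w is tD - w.  The element QI a b stands for a + b w.*)

Definition is1mod4 (D : int) : bool := (D %% 4)%Z == 1.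
Definition tD (D : int) : int := if is1mod4 D then 1 else 0.
Definition nD (D : int) : int := if is1mod4 D then ((D - 1) %/ 4)%Z else D.

Record qint (D : int) := QI { re : int; im : int }.

Section QintRing.
Variable D : int.

Definition qint2pair (x : qint D) := (re x, im x).
Definition pair2qint (p : int * int) : qint D := QI D p.1 p.2.
Lemma qint2pairK : cancel qint2pair pair2qint. Proof. by case. Qed.

HB.instance Definition _ := Countable.copy (qint D) (can_type qint2pairK).

Definition qzero : qint D := QI D 0 0.
Definition qone : qint D := QI D 1 0.
Definition qopp (x : qint D) : qint D := QI D (- re x) (- im x).
Definition qadd (x y : qint D) : qint D := QI D (re x + re y) (im x + im y).
Definition qmul (x y : qint D) : qint D :=
  QI D (re x * re y + nD D * im x * im y)
       (re x * im y + im x * re y + tD D * im x * im y).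

Lemma qaddA : associative qadd.
Proof. by case=> a b [c d] [e f]; rewrite /qadd /=; congr QI; ring. Qed.
Lemma qaddC : commutative qadd.
Proof. by case=> a b [c d]; rewrite /qadd /=; congr QI; ring. Qed.
Lemma qadd0 : left_id qzero qadd.
Proof. by case=> a b; rewrite /qadd /=; congr QI; ring. Qed.
Lemma qaddN : left_inverse qzero qopp qadd.
Proof. by case=> a b; rewrite /qadd /=; congr QI; ring. Qed.

HB.instance Definition _ := GRing.isZmodule.Build (qint D) qaddA qaddC qadd0 qaddN.

Lemma qmulA : associative qmul.
Proof. by case=> a b [c d] [e f]; rewrite /qmul /=; congr QI; ring. Qed.
Lemma qmulC : commutative qmul.
Proof. by case=> a b [c d]; rewrite /qmul /=; congr QI; ring. Qed.
Lemma qmul1 : left_id qone qmul.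
Proof. by case=> a b; rewrite /qmul /=; congr QI; ring. Qed.
Lemma qmulDl : left_distributive qmul qadd.
Proof. by case=> a b [c d] [e f]; rewrite /qmul /= /qadd /=; congr QI; ring. Qed.
Lemma qone_neq0 : qone != 0.
Proof. by []. Qed.

HB.instance Definition _ :=
  GRing.Zmodule_isComNzRing.Build (qint D) qmulA qmulC qmul1 qmulDl qone_neq0.

End QintRing.

(* Conjugation: conj (a + b w) = a + b (tD - w) = (a + tD b) - b w. *)
Definition qconj (D : int) (x : qint D) : qint D :=
  QI D (re x + tD D * im x) (- im x).

Definition qnorm (D : int) (z : qint D) : qint D := z * qconj z.

(* Its integer value (the w-coordinate of z * conj z is always 0). *)
Definition qnormZ (D : int) (z : qint D) : int := re (qnorm z).

Definition squarefree (D : int) : Prop :=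
  D != 0 /\ forall n : nat, (n * n %| `|D|)%N -> n = 1%N.

Definition is_unit (R : comNzRingType) (x : R) : Prop := exists y, x * y = 1.
Definition divides (R : comNzRingType) (x y : R) : Prop := exists w, y = x * w.
Definition in_pideal (R : comNzRingType) (p x : R) : Prop := divides p x.

Definition irreducible_elt (R : comNzRingType) (p : R) : Prop :=
  p != 0 /\ ~ is_unit p /\
  forall x y : R, p = x * y -> is_unit x \/ is_unit y.

Definition prime_elt (R : comNzRingType) (p : R) : Prop :=
  p != 0 /\ ~ is_unit p /\
  forall x y : R, divides p (x * y) -> divides p x \/ divides p y.

Definition Ip (D : int) (p : qint D) (z : qint D) : Prop :=
  ~ is_unit z /\ ~ in_pideal p z /\
  exists m : qint D, ~ in_pideal p m /\ in_pideal p (z * m).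

Definition Amat (D : int) (p : int) (z : qint D) : 'M[qint D]_2 :=
  \matrix_(i < 2, j < 2)
    if (i == 0) && (j == 0) then p%:~R
    else if (i == 0) && (j == 1) then z
    else if (i == 1) && (j == 0) then qconj z
    else ((qnormZ z %/ p)%Z)%:~R.

Definition mx2 (R : nzRingType) (a b c d : R) : 'M[R]_2 :=
  \matrix_(i < 2, j < 2)
    if (i == 0) && (j == 0) then a
    else if (i == 0) && (j == 1) then b
    else if (i == 1) && (j == 0) then c
    else d.

Definition idempotent_mx (R : nzRingType) (M : 'M[R]_2) : Prop := M *m M = M.

(* Main.v *)
Require Import Defs.
From HB Require Import structures.
From mathcomp Require Import all_boot all_order all_algebra.
From mathcomp Require Import ring zify.
Import Order.TTheory GRing.Theory Num.Theory.
Local Open Scope ring_scope.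

Lemma natQ (D : int) (n : nat) : (n%:R : qint D) = QI D n%:Z 0.
Proof.
elim: n => [//|n IH]; rewrite mulrS IH /GRing.add /=.
rewrite /qadd /=; congr QI; lia.
Qed.

Lemma intQ (D : int) (x : int) : (x%:~R : qint D) = QI D x 0.
Proof.
case: x => n; first by rewrite -pmulrn natQ.
rewrite NegzE mulrNz -pmulrn natQ /GRing.opp /= /qopp /=; congr QI; lia.
Qed.

Lemma qmulE D (x y : qint D) : x * y = qmul x y. Proof. by []. Qed.
Lemma qaddE D (x y : qint D) : x + y = qadd x y. Proof. by []. Qed.
Lemma qoppE D (x : qint D) : - x = qopp x. Proof. by []. Qed.

Definition Nint (D : int) (x : qint D) : int :=
  re x * re x + tD D * re x * im x - nD D * im x * im x.

Arguments Nint {D}.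
Lemma NintM D (x y : qint D) : Nint (x * y : qint D) = Nint x * Nint y.
Proof. case: x => a b; case: y => c d; rewrite /Nint qmulE /qmul /=; ring. Qed.

Lemma qnormZE D (x : qint D) : qnormZ x = Nint x.
Proof. case: x => a b; rewrite /qnormZ /qnorm /Nint /qconj qmulE /qmul /=; ring. Qed.

Lemma qnormE D (x : qint D) : x * qconj x = (qnormZ x)%:~R.
Proof.
rewrite intQ qnormZE; case: x => a b.
rewrite /Nint /qconj qmulE /qmul /=; congr QI; ring.
Qed.

Lemma sq_lemma (D X Y : int) : squarefree D -> D != 1 -> X * X = D * (Y * Y) -> Y = 0.
Proof.
move=> [D0 sqf] D1 E.
apply/eqP; apply: contraT => Y0.
have Dpos : 0 < D.
  have : 0 <= X * X by nia.
  have : 0 < Y * Y by rewrite -expr2 exprn_even_gt0.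
  move=> h1 h2; rewrite E in h2; nia.
have E' : (`|X| ^ 2 = `|D| * `|Y| ^ 2)%N.
  apply/eqP; rewrite -(eqr_nat int).
  by rewrite natrM !natrX !natz !abszE -!normrX -normrM !expr2 E.
have : (`|Y| ^ 2 %| `|X| ^ 2)%N by rewrite E' dvdn_mull.
rewrite dvdn_pexp2r // => /dvdnP [t Ht].
have Yp : (0 < `|Y|)%N by rewrite absz_gt0.
have : (t * t = `|D|)%N.
  move: E'; rewrite Ht expnMn => /eqP; rewrite eqn_pmul2r ?expn_gt0 ?Yp // => /eqP <-.
  by rewrite expnS expn1.
move=> Tt. have := sqf t; rewrite Tt dvdnn => /(_ isT) t1.
move: Tt; rewrite t1 => /esym A.
move: D1 => /eqP; lia.
Qed.

Lemma D1mod4 (D : int) : is1mod4 D -> D = 4 * nD D + 1.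
Proof.
rewrite /nD /is1mod4 => /eqP h; rewrite h.
have E := divz_eq D 4; rewrite h in E.
have -> : D - 1 = (D %/ 4)%Z * 4 by rewrite {1}E addrK.
by rewrite mulzK // mulrC {1}E.
Qed.

Lemma Nint0 D (x : qint D) : squarefree D -> D != 1 -> Nint x = 0 -> x = 0.
Proof.
move=> sq D1; case: x => a b; rewrite /Nint /= /tD.
case h: (is1mod4 D) => /= H.
  have E := @D1mod4 D h.
  have b0 : b = 0.
    apply: (@sq_lemma D (2 * a + b) b sq D1).
    rewrite E; move: H; generalize (nD D) => n H; nia.
  subst b; have : a * a = 0 by nia.
  by move/eqP; rewrite mulf_eq0 orbb => /eqP ->.
have b0 : b = 0.
  apply: (@sq_lemma D a b sq D1).
  move: H; rewrite /nD h => H; nia.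
subst b; have : a * a = 0 by nia.
by move/eqP; rewrite mulf_eq0 orbb => /eqP ->.
Qed.

Lemma qdomain D (x y : qint D) : squarefree D -> D != 1 -> x * y = 0 -> x = 0 \/ y = 0.
Proof.
move=> sq D1 h.
have : Nint x * Nint y = 0 by rewrite -NintM h /Nint /=; ring.
move/eqP; rewrite mulf_eq0 => /orP [] /eqP H; [left|right]; exact: (@Nint0 D _ sq D1 H).
Qed.

Lemma cancelL D (z x y : qint D) : squarefree D -> D != 1 -> z != 0 -> z * x = z * y -> x = y.
Proof.
move=> sq D1 z0 h; apply/eqP; rewrite -subr_eq0; apply/eqP.
have : z * (x - y) = 0 by rewrite mulrBr h subrr.
by case/(@qdomain D _ _ sq D1) => // /eqP; rewrite (negbTE z0).
Qed.

Lemma via3 (R : comNzRingType) (t1 t2 t3 : R) {x y u1 v1 u2 v2 u3 v3 : R} :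
  u1 = v1 -> u2 = v2 -> u3 = v3 ->
  x - y = t1 * (u1 - v1) + t2 * (u2 - v2) + t3 * (u3 - v3) -> x = y.
Proof.
move=> -> -> ->; rewrite !subrr !mulr0 !addr0 => /eqP; rewrite subr_eq0 => /eqP //.
Qed.

Lemma mx2M (R : comNzRingType) (a b c d a' b' c' d' : R) :
  mx2 a b c d *m mx2 a' b' c' d' =
  mx2 (a * a' + b * c') (a * b' + b * d') (c * a' + d * c') (c * b' + d * d').
Proof.
apply/matrixP => i j; rewrite !mxE !big_ord_recl big_ord0 !mxE addr0.
by case: i j => [[|[|i]] Hi] [[|[|j]] Hj].
Qed.

Lemma mx2_inj (R : comNzRingType) (a b c d a' b' c' d' : R) :
  mx2 a b c d = mx2 a' b' c' d' -> [/\ a = a', b = b', c = c' & d = d'].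
Proof.
move=> h.
have h00 := congr1 (fun M : 'M_2 => M 0 0) h.
have h01 := congr1 (fun M : 'M_2 => M 0 1) h.
have h10 := congr1 (fun M : 'M_2 => M 1 0) h.
have h11 := congr1 (fun M : 'M_2 => M 1 1) h.
by move: h00 h01 h10 h11; rewrite /= !mxE /=.
Qed.

Lemma mx2_eq (R : comNzRingType) (a b c d a' b' c' d' : R) :
  a = a' -> b = b' -> c = c' -> d = d' -> mx2 a b c d = mx2 a' b' c' d'.
Proof. by move=> -> -> -> ->. Qed.

Lemma Amat_mx2 D (p : nat) (z : qint D) :
  Amat p z = mx2 p%:R z (qconj z) ((qnormZ z %/ p%:Z)%Z)%:~R.
Proof. by rewrite /Amat /mx2 pmulrn. Qed.

Arguments via3 {R} t1 t2 t3 {x y u1 v1 u2 v2 u3 v3}.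
Arguments cancelL {D z x y}.
Theorem lemma3p1 (D : int) (p : nat) (z : qint D) :
  squarefree D -> D != 1 ->
  prime p ->
  irreducible_elt (p%:R : qint D) -> ~ prime_elt (p%:R : qint D) ->
  Ip (p%:R : qint D) z ->
  let k : qint D := ((qnormZ z %/ p%:Z)%Z)%:~R in
  forall a b c d e f : qint D,
    (Amat p z = mx2 a b c (1 - a) *m mx2 d e f (1 - d) /\
     idempotent_mx (mx2 a b c (1 - a)) /\ idempotent_mx (mx2 d e f (1 - d)))
    <->
    (p%:R = a * d + b * f /\ z * (1 - a) = k * b /\ qconj z * a = p%:R * c /\
     z * d = p%:R * e /\ qconj z * (1 - d) = k * f).
Proof.
move=> sq D1 pr [P0 _] _ [_ [zN [m [mN zm]]]] k a b c d e f.
have Ak : Amat p z = mx2 p%:R z (qconj z) k by rewrite Amat_mx2.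
rewrite Ak /idempotent_mx !mx2M.
have pN : (p%:Z %| qnormZ z)%Z.
  apply/negPn/negP => ndiv; apply: mN.
  have cop : gcdz p (qnormZ z) = 1.
    apply/eqP; have := prime_coprime `|qnormZ z| pr.
    by rewrite dvdzE in ndiv; rewrite (negbTE ndiv) /coprime /gcdz /= => /eqP ->.
  case: (Bezoutz p (qnormZ z)) => u [v]; rewrite cop => Huv.
  case: zm => w Hw.
  have Hm : m = m * (u%:~R * p%:R + v%:~R * (z * qconj z)).
    by rewrite qnormE -intrM pmulrn -intrM -intrD Huv mulr1.
  exists (m * u%:~R + v%:~R * qconj z * w).
  rewrite {1}Hm.
  have -> : m * (u%:~R * p%:R + v%:~R * (z * qconj z)) =
    p%:R * (m * u%:~R) + v%:~R * qconj z * (z * m) by ring.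
  rewrite Hw; ring.
have z0 : z != 0.
  by apply/eqP => z0; apply: zN; exists 0; rewrite z0 mulr0.
have N0 : qnormZ z != 0.
  apply/eqP => h; move/eqP: z0; apply; apply: (@Nint0 D _ sq D1); by rewrite -qnormZE.
have kp : (qnormZ z %/ p)%Z * p = qnormZ z := divzK pN.
have K0 : k != 0.
  rewrite /k intQ; apply/eqP; case => h; move: kp N0; rewrite h mul0r => <-.
  by rewrite eqxx.
have PK : p%:R * k = z * qconj z.
  by rewrite qnormE /k pmulrn -intrM mulrC kp.
clearbody k.
have P0' : (p%:R : qint D) != 0 by [].
split.
  case=> /mx2_inj [h1 h2 h3 h4] [/mx2_inj [b1 _ _ _] /mx2_inj [e1 _ _ _]].
  split; first exact: h1.
  split; first by rewrite h2 h4; apply: (via3 (- e) 0 0 b1 (erefl 0) (erefl 0)); ring.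
  split; first by rewrite h3 h1; apply: (via3 (- f) 0 0 b1 (erefl 0) (erefl 0)); ring.
  split; first by rewrite h2 h1; apply: (via3 (- b) 0 0 e1 (erefl 0) (erefl 0)); ring.
  by rewrite h3 h4; apply: (via3 (- c) 0 0 e1 (erefl 0) (erefl 0)); ring.
case=> [H1 [H2 [H3 [H4 H5]]]].
set W := qconj z in H3 H5 PK *.
have F1 : z * f = p%:R * (1 - d).
  apply: (cancelL sq D1 K0).
  by apply: (via3 (- z) (- (1 - d)) 0 H5 PK (erefl 0)); ring.
have F2 : W * b = p%:R * (1 - a).
  apply: (cancelL sq D1 K0).
  by apply: (via3 (- W) (- (1 - a)) 0 H2 PK (erefl 0)); ring.
have F3 : z * c = k * a.
  apply: (cancelL sq D1 P0).
  by apply: (via3 (- z) (- a) 0 H3 PK (erefl 0)); ring.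
have E2 : z = a * e + b * (1 - d).
  apply: (cancelL sq D1 P0).
  by apply: (via3 z a b H1 H4 F1); ring.
have E3 : W = c * d + (1 - a) * f.
  apply: (cancelL sq D1 P0).
  by apply: (via3 W d f H1 H3 F2); ring.
have E4 : k = c * e + (1 - a) * (1 - d).
  apply: (cancelL sq D1 z0).
  by apply: (via3 (- e) (- (1 - d)) k F3 H2 E2); ring.
have Hbc : b * c = a - a * a.
  apply: (cancelL sq D1 z0).
  by apply: (via3 b (- a) 0 F3 H2 (erefl 0)); ring.
have Hef : e * f = d - d * d.
  apply: (cancelL sq D1 z0).
  by apply: (via3 e (- (1 - d)) 0 F1 H4 (erefl 0)); ring.
split; first by apply: mx2_eq.
split; apply: mx2_eq; try ring.
- by apply: (via3 1 0 0 Hbc (erefl 0) (erefl 0)); ring.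
- by apply: (via3 1 0 0 Hbc (erefl 0) (erefl 0)); ring.
- by apply: (via3 1 0 0 Hef (erefl 0) (erefl 0)); ring.
- by apply: (via3 1 0 0 Hef (erefl 0) (erefl 0)); ring.
Qed.
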